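(* Let $p$ be a prime, $R$ an $F$-pure ring of characteristic $p$, and $f\in R$ a non-zero non-unit. Then for every integer $d\ge1$, \[ p^d\,\langle \operatorname{fpt}(f)\rangle_d = \max\{a\in\mathbb{N} : R\cdot f^{a/p^d}\subseteq R^{1/p^d}\text{ splits over }R\}. \]
   Context: A ring $R$ of characteristic $p$ is $F$-pure if $R\subseteq R^{1/p}$ splits as a map of $R$-modules; such a ring is reduced. Roots. $R^{1/p^e}$ is the ring of formal symbols $r^{1/p^e}$ ($r\in R$), with $r^{1/p^e}+s^{1/p^e}=(r+s)^{1/p^e}$ and $r^{1/p^e}s^{1/p^e}=(rs)^{1/p^e}$. It contains $R$ via $r\mapsto(r^{p^e})^{1/p^e}$. Powers of $f$. $f^{a/p^e}:=(f^a)^{1/p^e}$. Splitting. For $t \in R^{1/p^e}$, the inclusion $R\cdot t\subseteq R^{1/p^e}$ splits over $R$ if some $R$-linear $\theta:R^{1/p^e}\to R$ has $\theta(t)=1$. $F$-pure threshold. $(R,f^\lambda)$ is $F$-pure if $R\cdot f^{\lfloor (p^e-1)\lambda\rfloor/p^e}\subseteq R^{1/p^e}$ splits for all $e\ge1$. $\operatorname{fpt}(f)$ is the supremum of $\lambda\ge 0$ with $(R,f^\lambda)$ $F$-pure; it lies in $[0,1]$. Base $p$ expansions. For $\alpha\in(0,1]$, its non-terminating base $p$ expansion is the unique expression $\alpha=\sum_{e\ge1}a_e/p^e$ with integers $0\le a_e\le p-1$ not all eventually zero. The $e$-th truncation is $\langle\alpha\rangle_e:=\sum_{i=1}^e a_i/p^i$.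 By convention $\langle 0\rangle_e=0$. *)

(* Defs.v *)
From HB Require Import structures.
From mathcomp Require Import all_boot all_order all_algebra.
From mathcomp Require Import all_classical all_reals.
From mathcomp Require Import topology normedtype sequences.
From mathcomp Require Import Rstruct Rstruct_topology.

Set Implicit Arguments.
Unset Strict Implicit.
Unset Printing Implicit Defensive.

Import Order.TTheory GRing.Theory Num.Theory.
Local Open Scope ring_scope.
Local Open Scope classical_set_scope.

(* R^{1/p^e} is identified with R as an abelian group (the symbol r^{1/p^e}
   is represented by r), with R-module structure  r . s = r^(p^e) * s.
   An R-linear map theta : R^{1/p^e} -> R is thus an additive map
   theta : R -> R with theta (r^(p^e) * s) = r * theta s. *)
Definition frob_linear (A : comNzRingType) (p e : nat) (theta : A -> A) : Prop :=
  (forall x y : A, theta (x + y) = theta x + theta y) /\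
  (forall r s : A, theta (r ^+ (p ^ e) * s) = r * theta s).

(* For t in R^{1/p^e} (represented by t : A), R.t ⊆ R^{1/p^e} splits over R. *)
Definition splits (A : comNzRingType) (p e : nat) (t : A) : Prop :=
  exists theta : A -> A, frob_linear p e theta /\ theta t = 1.

Definition Fpure (A : comNzRingType) (p : nat) : Prop := splits p 1 (1 : A).

(* (R, f^lambda) is F-pure: R . f^{floor((p^e-1) lambda)/p^e} ⊆ R^{1/p^e}
   splits for every e >= 1 (f^{a/p^e} is represented by f^a). *)
Definition Fpure_pair (A : comNzRingType) (p : nat) (f : A) (lambda : Rdefinitions.R) : Prop :=
  forall e : nat, (1 <= e)%N ->
    splits p e (f ^+ Num.truncn (((p ^ e)%N%:R - 1) * lambda)).

Definition fpt (A : comNzRingType) (p : nat) (f : A) : Rdefinitions.R :=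
  sup [set lambda : Rdefinitions.R | 0 <= lambda /\ Fpure_pair p f lambda].

(* a : nat -> nat (a e = the e-th digit, e >= 1) is a non-terminating base p
   expansion of alpha. *)
Definition nonterm_expansion (p : nat) (alpha : Rdefinitions.R) (a : nat -> nat) : Prop :=
  (forall e, (1 <= e)%N -> (a e < p)%N) /\
  (forall N, exists e, (N <= e)%N /\ a e <> 0%N) /\
  ((fun n : nat => \sum_(1 <= i < n.+1) (a i)%:R / (p%:R ^+ i) : Rdefinitions.R)
     @ \oo --> alpha).

(* e-th truncation <alpha>_e of the non-terminating base p expansion
   (which is unique when it exists, i.e. for alpha in (0,1]);
   by convention <0>_e = 0 (0 has no such expansion). *)
Definition trunc_exp (p : nat) (alpha : Rdefinitions.R) (e : nat) : Rdefinitions.R :=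
  match pselect (exists a, nonterm_expansion p alpha a) with
  | left H => let a := projT1 (cid H) in
              \sum_(1 <= i < e.+1) (a i)%:R / (p%:R ^+ i)
  | right _ => 0
  end.

(* Main.v *)
Require Import Defs.
From HB Require Import structures.
From mathcomp Require Import all_boot all_order all_algebra.
From mathcomp Require Import all_classical all_reals.
From mathcomp Require Import topology normedtype sequences.
From mathcomp Require Import Rstruct Rstruct_topology.
From mathcomp Require Import zify ring lra.
Import Order.TTheory GRing.Theory Num.Theory.
Local Open Scope ring_scope.
Lemma fl_comp (A : comNzRingType) (p e k : nat) (th ph : A -> A) :
  frob_linear p e th -> frob_linear p k ph -> frob_linear p (e + k) (th \o ph).
Proof.
move=> [thD thM] [phD phM]; split=> [x y|r s] /=; first by rewrite phD thD.
by rewrite expnD exprM phM thM.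
Qed.

Lemma fl_id (A : comNzRingType) (p : nat) : frob_linear p 0 (@id A).
Proof. by split=> // r s; rewrite expn0 expr1. Qed.

Lemma fl_mul (A : comNzRingType) (p e : nat) (th : A -> A) (c : A) :
  frob_linear p e th -> frob_linear p e (fun x => th (c * x)).
Proof.
move=> [thD thM]; split=> [x y|r s]; first by rewrite mulrDr thD.
by rewrite mulrCA thM.
Qed.

Lemma splits_one (A : comNzRingType) (p e : nat) :
  Fpure A p -> splits p e (1 : A).
Proof.
move=> [ph [phL ph1]]; elim: e => [|e [th [thL th1]]].
  by exists id; split=> //; apply: fl_id.
exists (th \o ph); split; first by rewrite -addn1; apply: fl_comp.
by rewrite /= ph1.
Qed.

Lemma splits_down (A : comNzRingType) (p e a b : nat) (f : A) :
  (b <= a)%N -> splits p e (f ^+ a) -> splits p e (f ^+ b).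
Proof.
move=> ba [th [thL th1]]; exists (fun x => th (f ^+ (a - b) * x)); split.
  exact: fl_mul.
by rewrite -exprD subnK.
Qed.

Lemma splits_mulp (A : comNzRingType) (p e k a : nat) (f : A) :
  splits p e (f ^+ a) -> splits p k (f ^+ 1) -> splits p (e + k) (f ^+ (a * p ^ k + 1)).
Proof.
move=> [th [thL th1]] [ph [phL ph1]]; exists (th \o ph); split.
  exact: fl_comp.
have [_ phM] := phL.
by rewrite /= exprD exprM phM ph1 mulr1.
Qed.

Lemma splits_mulp0 (A : comNzRingType) (p e a : nat) (f : A) :
  Fpure A p -> splits p e (f ^+ a) -> splits p e.+1 (f ^+ (a * p)).
Proof.
move=> [ph [phL ph1]] [th [thL th1]]; exists (th \o ph); split.
  by rewrite -addn1; apply: fl_comp.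
have [_ phM] := phL.
have := phM (f ^+ a) 1.
rewrite expn1 mulr1 /=.
rewrite exprM.
move=> ->.
by rewrite ph1 mulr1.
Qed.

Lemma splits_divp (A : comNzRingType) (p e b : nat) (f : A) :
  p \in [pchar A] -> splits p e.+1 (f ^+ b) -> splits p e (f ^+ (b %/ p)).
Proof.
move=> hp /(@splits_down _ _ _ _ _ _ (leq_divM b p)) [ps [[psD psM] ps1]].
exists (fun x => ps (x ^+ p)); split; last by rewrite -exprM.
split=> [x y|r s].
  by rewrite -!(pFrobenius_autE hp) pFrobenius_autD_comm ?psD //; apply: mulrC.
by rewrite exprMn -exprM -expnSr psM.
Qed.

Lemma splits_bound (A : comNzRingType) (p e a : nat) (f : A) :
  ~ (exists g : A, f * g = 1) -> splits p e (f ^+ a) -> (a < p ^ e)%N.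
Proof.
move=> nu [th [[_ thM] th1]]; rewrite ltnNge; apply/negP=> h.
apply: nu; exists (th (f ^+ (a - p ^ e))).
by rewrite -thM -exprD subnKC.
Qed.
Fixpoint Nval (p : nat) (b : nat -> nat) (d : nat) : nat :=
  if d is d'.+1 then (p * Nval p b d' + b d'.+1)%N else 0%N.

Lemma psum (p : nat) (b : nat -> nat) (d : nat) : (0 < p)%N ->
  \sum_(1 <= i < d.+1) (b i)%:R / (p%:R ^+ i) =
  (Nval p b d)%:R / (p%:R ^+ d) :> Rdefinitions.R.
Proof.
move=> p0; have pn0 : p%:R != 0 :> Rdefinitions.R by rewrite pnatr_eq0 -lt0n.
elim: d => [|d IH]; first by rewrite big_geq // mul0r.
rewrite big_nat_recr //= IH natrD natrM exprS.
field; rewrite ?mulf_neq0 // ?expf_neq0 //.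
Qed.

Lemma Nmono p b m k : (p ^ k * Nval p b m <= Nval p b (m + k))%N.
Proof.
elim: k => [|k IH]; first by rewrite expn0 mul1n addn0.
rewrite addnS /= expnS -mulnA.
apply: (leq_trans _ (leq_addr _ _)); exact: leq_mul.
Qed.

Lemma Nup p b m k : (forall i, (1 <= i)%N -> (b i < p)%N) ->
  (Nval p b (m + k) < p ^ k * (Nval p b m).+1)%N.
Proof.
move=> bp; elim: k => [|k IH]; first by rewrite expn0 mul1n addn0.
rewrite addnS /= expnS -mulnA.
have := bp (m + k).+1 isT; nia.
Qed.

Lemma divle (p x y m n : nat) : (0 < p)%N -> (x * p ^ n <= y * p ^ m)%N ->
  x%:R / p%:R ^+ m <= y%:R / p%:R ^+ n :> Rdefinitions.R.
Proof.
move=> p0 h; have pp : 0 < p%:R :> Rdefinitions.R by rewrite ltr0n.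
rewrite ler_pdivrMr ?exprn_gt0 // mulrAC ler_pdivlMr ?exprn_gt0 //.
by rewrite -!natrX -!natrM ler_nat.
Qed.

Lemma divlt (p x y m n : nat) : (0 < p)%N -> (x * p ^ n < y * p ^ m)%N ->
  x%:R / p%:R ^+ m < y%:R / p%:R ^+ n :> Rdefinitions.R.
Proof.
move=> p0 h; have pp : 0 < p%:R :> Rdefinitions.R by rewrite ltr0n.
rewrite ltr_pdivrMr ?exprn_gt0 // mulrAC ltr_pdivlMr ?exprn_gt0 //.
by rewrite -!natrX -!natrM ltr_nat.
Qed.

Lemma exp_bounds (p : nat) (al : Rdefinitions.R) (b : nat -> nat) (d : nat) :
  (1 < p)%N -> nonterm_expansion p al b ->
  (Nval p b d)%:R / p%:R ^+ d < al /\ al <= (Nval p b d).+1%:R / p%:R ^+ d.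
Proof.
move=> p1 [bp [nz cv]]; have p0 : (0 < p)%N by apply: ltnW.
have E : (fun n : nat => \sum_(1 <= i < n.+1) (b i)%:R / (p%:R ^+ i) : Rdefinitions.R)
  = (fun n => (Nval p b n)%:R / p%:R ^+ n).
  by apply: funext => n; rewrite psum.
rewrite E in cv.
split.
  have [e [de be]] := nz d.+1.
  have lt1 : (Nval p b d)%:R / p%:R ^+ d < (Nval p b e)%:R / p%:R ^+ e :> Rdefinitions.R.
    apply: divlt => //.
    case: e de be => [//|e'] de be.
    have := Nmono p b d (e' - d); rewrite subnKC // => hm.
    have hpe : (p ^ e'.+1 = p * p ^ (e' - d) * p ^ d)%N.
      by rewrite -mulnA -expnD subnK // expnS.
    rewrite hpe /=.
    have : (0 < b e'.+1)%N by rewrite lt0n; apply/eqP.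
    have : (0 < p ^ d)%N by rewrite expn_gt0 p0.
    nia.
  apply: (lt_le_trans lt1); apply: (cvgr_to_ge cv).
  exists e => // n /= en; apply: divle => //.
  have := Nmono p b e (n - e); rewrite subnKC // => hm.
  have hpe : (p ^ n = p ^ (n - e) * p ^ e)%N by rewrite -expnD subnK.
  rewrite hpe; nia.
apply: (cvgr_to_le cv); exists d => // n /= dn; apply: divle => //.
have := Nup p b d (n - d) bp; rewrite subnKC // => hm.
have hpe : (p ^ n = p ^ (n - d) * p ^ d)%N by rewrite -expnD subnK.
rewrite hpe; nia.
Qed.

Lemma nat_uniq (x : Rdefinitions.R) (m m' : nat) :
  m%:R < x -> x <= m.+1%:R -> m'%:R < x -> x <= m'.+1%:R -> m = m'.
Proof.
move=> h1 h2 h3 h4; case: (ltngtP m m') => // h.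
  have : m.+1%:R <= m'%:R :> Rdefinitions.R by rewrite ler_nat.
  move=> h5; have := lt_le_trans h3 h2; rewrite ltNge h5 //.
have : m'.+1%:R <= m%:R :> Rdefinitions.R by rewrite ler_nat.
move=> h5; have := lt_le_trans h1 h4; rewrite ltNge h5 //.
Qed.

Lemma bounds_mul (p : nat) (al : Rdefinitions.R) (b : nat -> nat) (d : nat) :
  (1 < p)%N -> nonterm_expansion p al b ->
  (Nval p b d)%:R < (p ^ d)%N%:R * al /\ (p ^ d)%N%:R * al <= (Nval p b d).+1%:R.
Proof.
move=> p1 hb; have [h1 h2] := @exp_bounds _ _ _ d p1 hb.
have pp : 0 < (p ^ d)%N%:R :> Rdefinitions.R by rewrite ltr0n expn_gt0 ltnW.
rewrite natrX in pp *.
by rewrite mulrC -ltr_pdivrMr // -ler_pdivlMr.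
Qed.

Lemma trunc_val (p : nat) (al : Rdefinitions.R) (a : nat -> nat) (d : nat) :
  (1 < p)%N -> nonterm_expansion p al a ->
  (p ^ d)%N%:R * trunc_exp p al d = (Nval p a d)%:R.
Proof.
move=> p1 ha; rewrite /trunc_exp; case: pselect => [H|H]; last first.
  by exfalso; apply: H; exists a.
case: (cid H) => b hb /=; rewrite psum; last exact: ltnW.
have -> : Nval p a d = Nval p b d.
  have [a1 a2] := @bounds_mul _ _ _ d p1 ha; have [b1 b2] := @bounds_mul _ _ _ d p1 hb.
  exact: nat_uniq a1 a2 b1 b2.
have pn0 : p%:R != 0 :> Rdefinitions.R by rewrite pnatr_eq0 -lt0n ltnW.
by rewrite natrX mulrC mulfVK // expf_neq0.
Qed.

Lemma trunc_zero (p : nat) (d : nat) : (1 < p)%N -> trunc_exp p 0 d = 0.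
Proof.
move=> p1; rewrite /trunc_exp; case: pselect => [H|H] //.
case: (cid H) => b hb /=; exfalso.
have [h1 _] := @exp_bounds _ _ _ d p1 hb.
have : 0 <= (Nval p b d)%:R / p%:R ^+ d :> Rdefinitions.R.
  by rewrite divr_ge0 // exprn_ge0.
by rewrite leNgt h1.
Qed.
Lemma big_pow (p : nat) (x : Rdefinitions.R) : (1 < p)%N ->
  exists e, (1 <= e)%N /\ x <= (p ^ e)%N%:R - 1.
Proof.
move=> p1; exists (Num.truncn x).+1; split => //.
have h1 := truncnS_gt x.
have h2 : ((Num.truncn x).+1 <= p ^ (Num.truncn x).+1 - 1)%N.
  have := ltn_expl (Num.truncn x).+1 p1; lia.
have h3 : ((Num.truncn x).+1%:R <= (p ^ (Num.truncn x).+1 - 1)%N%:R :> Rdefinitions.R).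
  by rewrite ler_nat.
rewrite natrB ?expn_gt0 ?(ltnW p1) // in h3.
exact: le_trans (ltW h1) h3.
Qed.

Lemma nu_exists (p : nat) (A : comNzRingType) (f : A) (e : nat) :
  Fpure A p -> ~ (exists g : A, f * g = 1) ->
  exists n, splits p e (f ^+ n) /\ (forall a, splits p e (f ^+ a) -> (a <= n)%N).
Proof.
move=> FP nu.
have ex : exists a, `[< splits p e (f ^+ a) >] by exists 0%N; apply/asboolP; rewrite expr0; exact: splits_one.
have ub : forall a, `[< splits p e (f ^+ a) >] -> (a <= p ^ e)%N.
  by move=> a /asboolP h; apply: ltnW; apply: splits_bound h.
case: (ex_maxnP ex ub) => n /asboolP hn hm; exists n; split => // a ha.
by apply: hm; apply/asboolP.
Qed.

Theorem mainTheorem3 (p : nat) (A : comNzRingType) (f : A) :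
  prime p -> p \in [pchar A] -> @Fpure A p ->
  f != 0 -> ~ (exists g : A, f * g = 1) ->
  forall d : nat, (1 <= d)%N ->
    exists n : nat,
      splits p d (f ^+ n) /\
      (forall a : nat, splits p d (f ^+ a) -> (a <= n)%N) /\
      (p ^ d)%N%:R * trunc_exp p (fpt p f) d = (n%:R : Rdefinitions.R).
Proof.
move=> pr pc FP fn0 nunit d d1.
have p1 : (1 < p)%N by apply: prime_gt1.
have p0 : (0 < p)%N by apply: ltnW.
pose nu e := projT1 (cid (@nu_exists p A f e FP nunit)).
have nuS : forall e, splits p e (f ^+ nu e) by move=> e; have [] := projT2 (cid (@nu_exists p A f e FP nunit)).
have nuM : forall e a, splits p e (f ^+ a) -> (a <= nu e)%N.
  by move=> e; have [] := projT2 (cid (@nu_exists p A f e FP nunit)).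
have nuB : forall e, (nu e < p ^ e)%N by move=> e; apply: splits_bound nunit (nuS e).
have nu0 : nu 0%N = 0%N by have := nuB 0%N; rewrite expn0; lia.
have nuLo : forall e, (nu e * p <= nu e.+1)%N by move=> e; apply: nuM; apply: splits_mulp0.
have nuHi : forall e, (nu e.+1 < (nu e).+1 * p)%N.
  move=> e; rewrite -ltn_divLR //; rewrite ltnS; apply: nuM; exact: splits_divp.
pose a i := if i is i'.+1 then (nu i'.+1 - p * nu i')%N else 0%N.
have Na : forall e, Nval p a e = nu e.
  elim=> [|e IH] /=; first by rewrite nu0.
  by rewrite IH subnKC // mulnC.
have ap : forall i, (1 <= i)%N -> (a i < p)%N.
  case=> [//|i] _ /=; have := nuHi i; have := nuLo i; lia.
suff [fptE | [L [fptE hL]]] : (fpt p f = 0 /\ nu d = 0%N) \/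
    (exists L, fpt p f = L /\ nonterm_expansion p L a).
- case: fptE => -> nd; exists (nu d); split; first exact: nuS.
  split; first exact: nuM.
  by rewrite trunc_zero // mulr0 nd.
- exists (nu d); split; first exact: nuS.
  split; first exact: nuM.
  by rewrite fptE (@trunc_val _ _ _ d p1 hL) Na.
have T0 : forall lam, 0 <= lam -> Fpure_pair p f lam -> forall e, (1 <= e)%N ->
    (Num.truncn (((p ^ e)%N%:R - 1) * lam) <= nu e)%N.
  by move=> lam _ hl e e1; apply: nuM; apply: hl.
case: (pselect (exists k, (0 < nu k)%N)) => [[k nuk]|nok]; last first.
  left; have nu_0 : forall e, nu e = 0%N.
    by move=> e; apply/eqP; rewrite -leqn0 leqNgt; apply/negP => h; apply: nok; exists e.
  split => //; rewrite /fpt; apply/le_anti/andP; split.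
    apply: ge_sup; first exists 0.
      split => // e _; rewrite mulr0 truncn0 expr0; exact: splits_one.
    move=> lam [l0 hl]; rewrite leNgt; apply/negP => lpos.
    have [e [e1 he]] := big_pow p (1 / lam) p1.
    have := T0 lam l0 hl e e1; rewrite nu_0 leqn0 => /eqP/truncn0Pn/negP; apply.
    have h : 1 / lam * lam <= ((p ^ e)%N%:R - 1) * lam by rewrite ler_wpM2r.
    by rewrite mulrAC mul1r divff ?gt_eqF in h.
  apply: sup_upper_bound; first split.
  - exists 0; split => // e _; rewrite mulr0 truncn0 expr0; exact: splits_one.
  - exists 0 => lam [l0 hl]; rewrite leNgt; apply/negP => lpos.
    have [e [e1 he]] := big_pow p (1 / lam) p1.
    have := T0 lam l0 hl e e1; rewrite nu_0 leqn0 => /eqP/truncn0Pn/negP; apply.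
    have h : 1 / lam * lam <= ((p ^ e)%N%:R - 1) * lam by rewrite ler_wpM2r.
    by rewrite mulrAC mul1r divff ?gt_eqF in h.
  - split => // e _; rewrite mulr0 truncn0 expr0; exact: splits_one.
right.
have Sk1 : splits p k (f ^+ 1) by apply: splits_down (nuS k).
have nz : forall N, exists e, (N <= e)%N /\ a e <> 0%N.
  move=> N; case: (pselect (exists e, (N <= e)%N /\ a e <> 0%N)) => // H; exfalso.
  have H0 : forall e, (N <= e)%N -> a e = 0%N.
    move=> e Ne; case: (eqVneq (a e) 0%N) => // ne; exfalso; apply: H; exists e.
    by split => //; apply/eqP.
  have Hj : forall j, nu (N + j)%N = (p ^ j * nu N)%N.
    elim=> [|j IH]; first by rewrite addn0 expn0 mul1n.
    have NS : forall x, nu x.+1 = (p * nu x + a x.+1)%N.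
      by move=> x; rewrite -(Na x.+1) -(Na x).
    rewrite addnS NS IH H0 ?addn0; last by rewrite ltnW // ltnS leq_addr.
    by rewrite expnS mulnA.
  have := nuM _ _ (@splits_mulp A p N k (nu N) f (nuS N) Sk1).
  by rewrite Hj mulnC addn1 ltnn.
pose u n := (nu n)%:R / p%:R ^+ n : Rdefinitions.R.
have umono : nondecreasing_seq u.
  move=> m n mn; rewrite /u; apply: divle => //.
  have := Nmono p a m (n - m); rewrite subnKC // !Na => hm.
  have hpe : (p ^ n = p ^ (n - m) * p ^ m)%N by rewrite -expnD subnK.
  rewrite hpe; nia.
have uub : has_ubound (range u).
  exists 1 => _ [n _ <-]; have := @divle p (nu n) 1 n 0%N p0.
  rewrite expr0 divr1 /u; apply; rewrite expn0 muln1 mul1n; exact: ltnW.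
have cv := nondecreasing_cvgn umono uub.
set L := sup (range u) in cv.
have hL : nonterm_expansion p L a.
  split => //; split => //.
  have E : (fun n : nat => \sum_(1 <= i < n.+1) (a i)%:R / (p%:R ^+ i) : Rdefinitions.R) = u.
    by apply: funext => n; rewrite psum // Na.
  by rewrite E.
exists L; split => //.
have bnd : forall e, (nu e)%:R < (p ^ e)%N%:R * L /\ (p ^ e)%N%:R * L <= (nu e).+1%:R.
  by move=> e; rewrite -(Na e); exact: (@bounds_mul _ _ _ e p1 hL).
have Lpos : 0 < L.
  have [h _] := bnd k.
  have h0 : 0 < (p ^ k)%N%:R * L by apply: le_lt_trans h; rewrite ler0n.
  by rewrite pmulr_rgt0 ?ltr0n ?expn_gt0 ?p0 in h0.
have TL : 0 <= L /\ Fpure_pair p f L.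
  split; first exact: ltW.
  move=> e e1; apply: (@splits_down A p e (nu e)); last exact: nuS.
  rewrite truncn_le_nat; have [_ h2] := bnd e.
  by apply: (lt_le_trans _ h2); rewrite mulrBl mul1r ltrBlDr ltrDl.
have ub : forall lam, 0 <= lam /\ Fpure_pair p f lam -> lam <= L.
  move=> lam [l0 hl]; rewrite leNgt; apply/negP => Llam.
  have [e [e1 he]] := big_pow p ((1 + lam) / (lam - L)) p1.
  have := T0 lam l0 hl e e1; rewrite leqNgt => /negP; apply; rewrite truncn_gt_nat.
  have [h1 _] := bnd e.
  have D0 : 0 < lam - L by rewrite subr_gt0.
  have h3 : (1 + lam) / (lam - L) * (lam - L) <= ((p ^ e)%N%:R - 1) * (lam - L).
    by rewrite ler_wpM2r // ltW.
  rewrite divfK ?gt_eqF // in h3.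
  move: h1 h3 Llam; rewrite -addn1 natrD.
  generalize ((p ^ e)%N%:R : Rdefinitions.R) => P; generalize ((nu e)%:R : Rdefinitions.R) => x.
  move=> h1 h3 Llam; nra.
rewrite /fpt; apply/le_anti/andP; split.
  by apply: ge_sup; [exists L; exact: TL | exact: ub].
apply: sup_upper_bound; last exact: TL.
by split; [exists L; exact: TL | exists L; exact: ub].
Qed.
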